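(* Let $\mathcal{M}$ be a separable metric space, $f:\mathcal{M}\to\mathcal{M}$ continuous, $\mathcal{X}\subseteq\mathcal{M}$ forward invariant under $f$, $\mathcal{Z}$ a separable metric space, $g:\mathcal{Z}\to\mathcal{Z}$, and $F:\mathcal{X}\to\mathcal{Z}$ continuous with $F\circ f=g\circ F$ on $\mathcal{X}$. For any $\xi\in\mathcal{X}$, if the trajectory through $\xi$ is forward precompact in $\mathcal{X}$, then $F(\xi)\in D^+_{\mathcal{Z}}(F(\omega_{\mathcal{X}}(\xi)))$.
   Context: $\omega_{\mathcal{X}}(\xi)$ is the set of $x\in\mathcal{X}$ such that $f^{k_j}(\xi)\to x$ for some indices $k_j\to\infty$; $\omega_{\mathcal{Z}}(\zeta)$ is defined analogously for $g$ on $\mathcal{Z}$. $D^+_{\mathcal{Z}}(\Omega)=\{\zeta\in\mathcal{Z}\mid\omega_{\mathcal{Z}}(\zeta)=\Omega\}$. The trajectory through $\xi$ is forward precompact in $\mathcal{X}$ if the closure in $\mathcal{X}$ of $\{f^k(\xi)\mid k\in\mathbb{N}\}$ is compact. *)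

(* Defs.v *)
From HB Require Import structures.
From mathcomp Require Import all_boot all_order all_algebra.
From mathcomp Require Import all_classical all_reals all_analysis.
Set Implicit Arguments. Unset Strict Implicit. Unset Printing Implicit Defensive.
Import Order.TTheory GRing.Theory Num.Theory.
Local Open Scope classical_set_scope.

Definition separable (T : topologicalType) : Prop :=
  exists D : set T, countable D /\ closure D = setT.

Definition tends_to_infty (k : nat -> nat) : Prop :=
  forall N : nat, exists J : nat, forall j : nat, (J <= j)%N -> (N <= k j)%N.

(* omega-limit set of xi under f, relative to the subset X of the ambient
   space: points x of X with f^{k_j}(xi) -> x for some k_j -> oo.
   (Convergence in the subspace X to a point of X is convergence in the
   ambient space.) *)
Definition omega_limit (T : topologicalType) (X : set T) (f : T -> T) (xi : T)
  : set T :=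
  [set x | X x /\ exists k : nat -> nat, tends_to_infty k /\
       ((fun j => iter (k j) f xi) @ \oo --> x)].

Definition Dplus (T : topologicalType) (g : T -> T) (Om : set T) : set T :=
  [set z | omega_limit setT g z = Om].

Definition forward_orbit (T : Type) (f : T -> T) (xi : T) : set T :=
  [set iter k f xi | k in setT].

(* The trajectory through xi is forward precompact in X: its closure in X
   (= ambient closure intersected with X) is compact. *)
Definition forward_precompact_in (T : topologicalType) (X : set T)
  (f : T -> T) (xi : T) : Prop :=
  compact (closure (forward_orbit f xi) `&` X).

(* Main.v *)
Require Import Defs.
From HB Require Import structures.
From mathcomp Require Import all_boot all_order all_algebra.
From mathcomp Require Import all_classical all_reals all_analysis.
Import Order.TTheory GRing.Theory Num.Theory.
Local Open Scope classical_set_scope.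
Local Open Scope ring_scope.

Lemma subseq_cvg (T : topologicalType) (w : nat -> T) (z : T) (k : nat -> nat) :
  (forall j, (j <= k j)%N) -> w @ \oo --> z -> (w \o k) @ \oo --> z.
Proof.
move=> hk wz A /wz [N _ hN]; exists N => // j /= Nj.
apply: hN => /=; exact: leq_trans Nj (hk j).
Qed.

Lemma cluster_subseq (R : realType) (M : pseudoMetricType R) (u : nat -> M) (x : M) :
  cluster (u @ \oo) x ->
  exists k : nat -> nat, (forall j, (k j < k j.+1)%N) /\ (u \o k) @ \oo --> x.
Proof.
move=> cl; rewrite /cluster /= in cl.
have H : forall N i : nat, exists n, (N <= n)%N /\ ball x (i.+1%:R^-1) (u n).
  move=> N i.
  have [y [[n hn1 <-] hn2]] : (u @` [set n | (N <= n)%N]) `&` ball x (i.+1%:R^-1) !=set0.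
    apply: (cl (u @` [set n | (N <= n)%N]) (ball x (i.+1%:R^-1))).
      by exists N => // n /= hn; exists n.
    by apply: nbhsx_ballx; rewrite invr_gt0 ltr0n.
  by exists n.
have [pick hpick] := @choice _ _ (fun Ni : nat * nat => fun n => (Ni.1 <= n)%N /\ ball x (Ni.2.+1%:R^-1) (u n))
   (fun Ni => H Ni.1 Ni.2).
pose fix k j := if j is j'.+1 then pick ((k j').+1, j) else pick (0%N, 0%N).
exists k; split.
  by move=> j /=; have [] := hpick ((k j).+1, j.+1).
apply/cvg_ballP => e e0.
have [N hN] : exists N : nat, (N.+1%:R^-1 < e). 
  have [N _ hN] := near_infty_natSinv_lt (PosNum e0).
  by exists N; apply: hN => /=.
exists N => // j /= Nj.
have hb : ball x (j.+1%:R^-1) (u (k j)).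
  by case: j Nj => [|j] Nj /=; [have [] := hpick (0%N,0%N) | have [] := hpick ((k j).+1, j.+1)].
apply: le_ball hb; apply/ltW/(le_lt_trans _ hN).
by rewrite lef_pV2 ?posrE ?ltr0n // ler_nat.
Qed.

Lemma incr_ge (k : nat -> nat) : (forall j, (k j < k j.+1)%N) -> forall j, (j <= k j)%N.
Proof. by move=> hk; elim=> // j IH; exact: leq_ltn_trans IH (hk j). Qed.

Lemma within_seq (R : realType) (M Z : pseudoMetricType R) (X : set M) (F : M -> Z)
  (w : nat -> M) (x : M) :
  (forall j, X (w j)) -> w @ \oo --> x -> F @ within X (nbhs x) --> F x ->
  (F \o w) @ \oo --> F x.
Proof.
move=> Xw wx Fx.
have wX : w @ \oo --> within X (nbhs x).
  move=> A hA.
  have [N _ hN] := wx _ hA; exists N => // j /= Nj; exact: (hN j Nj) (Xw j).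
exact: cvg_comp wX Fx.
Qed.

Local Close Scope ring_scope.
Theorem corollary26 (R : realType) (M Z : pseudoMetricType R)
  (hM : hausdorff_space M) (sM : separable M)
  (hZ : hausdorff_space Z) (sZ : separable Z)
  (f : M -> M) (f_cont : continuous f)
  (X : set M) (X_inv : f @` X `<=` X)
  (g : Z -> Z) (F : M -> Z) (F_cont : {within X, continuous F})
  (F_conj : forall x, X x -> F (f x) = g (F x))
  (xi : M) (Xxi : X xi) :
  forward_precompact_in X f xi ->
  Dplus g (F @` omega_limit X f xi) (F xi).
Proof.
move=> pc.
have Xu : forall n, X (iter n f xi).
  by elim=> //= n IH; apply: X_inv; exists (iter n f xi).
have Fu : forall n, F (iter n f xi) = iter n g (F xi).
  by elim=> //= n IH; rewrite F_conj // IH.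
rewrite /Dplus /=; apply/seteqP; split.
- move=> z [_ [k [tk kz]]].
  pose v := fun j => iter (k j) f xi.
  have [x [Kx clx]] : (closure (forward_orbit f xi) `&` X) `&` cluster (v @ \oo) !=set0.
    apply: pc; exists 0%N => // j _; split; last exact: Xu.
    by apply: subset_closure; exists (k j).
  have [k' [inck' cvk']] := @cluster_subseq R M v x clx.
  have ge := @incr_ge k' inck'.
  exists x.
    split; first exact: Kx.2.
    exists (k \o k'); split.
      move=> N; have [J hJ] := tk N; exists J => j Jj.
      exact: hJ (leq_trans Jj (ge j)).
    exact: cvk'.
  have h1 : (F \o (v \o k')) @ \oo --> F x.
    apply: (@within_seq R M Z X F) => //; first by move=> j; exact: Xu.
    exact: (@subspace_continuousP M X Z F).1 F_cont x Kx.2.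
  have h2 : (F \o (v \o k')) @ \oo --> z.
    have -> : F \o (v \o k') = (fun j => iter (k j) g (F xi)) \o k'.
      by apply: funext => j /=; rewrite Fu.
    exact: subseq_cvg.
  exact: (cvg_unique hZ h1 h2).
- move=> _ [x [Xx [k [tk kx]]] <-].
  split => //; exists k; split => //.
  have -> : (fun j => iter (k j) g (F xi)) = F \o (fun j => iter (k j) f xi).
    by apply: funext => j /=; rewrite Fu.
  apply: (@within_seq R M Z X F (fun j => iter (k j) f xi) x) => //.
  exact: (@subspace_continuousP M X Z F).1 F_cont x Xx.
Qed.
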